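(* Let $\mu,\nu\in\mathcal{P}(\mathcal{X})$, $0<m_1\le m_2<\infty$, $K:\mathcal{X}\times\mathcal{X}\to(0,1]$ measurable with lower decay $l$, and let $(\alpha_1,\tilde\alpha_1)$, $(\alpha_2,\tilde\alpha_2)$ be pairs of tail functions (with $\mu(B_{m_1})>0$, $\nu(B_{m_1})>0$, $\alpha_1,\alpha_2>0$). For $f\in\mathcal{F}^{\mu,norm}_{\alpha_1,\tilde\alpha_1}$, $g\in\mathcal{G}^{\nu,norm}_{\alpha_2,\tilde\alpha_2}$ and $r>0$, \begin{align*} \int L_{K^\top,\nu}(g)f\,d\mu\ge\ &\frac{1+l(r)}{2}-\frac{1-l(r)}{2}\int_{B_r}|f|\,d\mu\int_{B_r}|g|\,d\nu\\ &-\int|f|\,d\mu\int_{B_r^{\mathsf c}}|g|\,d\nu-\int_{B_r^{\mathsf c}}|f|\,d\mu\int_{B_r}|g|\,d\nu, \end{align*} and $\int L_{K^\top,\nu}(g)f\,d\mu\le\int|f|\,d\mu\int|g|\,d\nu$.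
   Context: $\mathcal{X}$ is a Polish space with metric $d_{\mathcal{X}}$, $x_0$ fixed, $B_r=\{x:d_{\mathcal{X}}(x_0,x)\le r\}$, $B_r^{\mathsf c}=\mathcal{X}\setminus B_r$. A non-increasing $l:[0,\infty)\to[0,\infty)$ is a lower decay of $K$ if $\inf_{x,y\in B_r}K(x,y)\ge l(r)$ for all $r>0$. $L_{K^\top,\nu}g(x)=\int K(y,x)g(y)\,\nu(dy)$. A tail function is a non-increasing $\alpha:(0,\infty)\to[0,\infty)$ with $\lim_{r\to\infty}\alpha(r)=0$. For $\rho\in\mathcal{P}(\mathcal{X})$: $\mathcal{F}^{\rho}_{\alpha,\tilde\alpha}$ is the set of $f\in L^2(\rho)$ with $f\mathbf 1_{B_{m_2}}\ge0$ $\rho$-a.s., $\int_{B_r^{\mathsf c}}f_+\,d\rho\le\alpha(r)\int f\,d\rho$ for all $r\ge m_1$, $\int_{B_r^{\mathsf c}}f_-\,d\rho\le\tilde\alpha(r)\int f\,d\rho$ for all $r\ge m_2$; $\mathcal{G}^{\rho}_{\alpha,\tilde\alpha}=\{g\in L^2(\rho):\int fg\,d\rho\ge0\ \forall f\in\mathcal{F}^{\rho}_{\alpha,\tilde\alpha}\}$; superscript $norm$ denotes elements with $\int\cdot\,d\rho=1$. *)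

(* Defs.v *)
From HB Require Import structures.
From mathcomp Require Import all_boot all_order all_algebra.
From mathcomp Require Import all_classical all_reals all_analysis.
Set Implicit Arguments. Unset Strict Implicit. Unset Printing Implicit Defensive.
Import Order.TTheory GRing.Theory Num.Theory.
Import numFieldNormedType.Exports.
Local Open Scope classical_set_scope.
Local Open Scope ring_scope.

Definition is_metric (R : realType) (T : Type) (dist : T -> T -> R) :=
  [/\ forall x y, 0 <= dist x y,
      forall x y, dist x y = 0 <-> x = y,
      forall x y, dist x y = dist y x &
      forall x y z, dist x z <= dist x y + dist y z].

Definition dopen (R : realType) (T : Type) (dist : T -> T -> R) (U : set T) :=
  forall x, U x -> exists2 e : R, 0 < e & forall y, dist x y < e -> U y.

Definition dcomplete (R : realType) (T : Type) (dist : T -> T -> R) :=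
  forall u : nat -> T,
    (forall e : R, 0 < e -> exists N, forall n m, (N <= n)%N -> (N <= m)%N ->
        dist (u n) (u m) < e) ->
    exists l, forall e : R, 0 < e -> exists N, forall n, (N <= n)%N -> dist (u n) l < e.

Definition dseparable (R : realType) (T : Type) (dist : T -> T -> R) :=
  exists D : set T, countable D /\
    forall x (e : R), 0 < e -> exists2 y, D y & dist x y < e.

Definition polish_borel (R : realType) (d : measure_display) (T : measurableType d)
  (dist : T -> T -> R) :=
  [/\ is_metric dist, dcomplete dist, dseparable dist &
      (@measurable d T) = <<s [set U | dopen dist U] >>].

Definition Ball (R : realType) (T : Type) (dist : T -> T -> R) (x0 : T) (r : R) : set T :=
  [set x | dist x0 x <= r].

Definition lower_decay (R : realType) (T : Type) (dist : T -> T -> R) (x0 : T)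
  (K : T -> T -> R) (l : R -> R) :=
  [/\ forall r, 0 <= r -> 0 <= l r,
      forall r s, 0 <= r -> r <= s -> l s <= l r &
      forall r, 0 < r -> forall x y, Ball dist x0 r x -> Ball dist x0 r y -> l r <= K x y].

Definition tail_function (R : realType) (a : R -> R) :=
  [/\ forall r, 0 < r -> 0 <= a r,
      forall r s, 0 < r -> r <= s -> a s <= a r &
      a r @[r --> +oo] --> 0].

Section L2.
Context (d : measure_display) (T : measurableType d) (R : realType).

Definition memL2 (rho : {measure set T -> \bar R}) (f : T -> R) :=
  measurable_fun setT f /\ rho.-integrable setT (fun x => ((f x) ^+ 2)%:E).

Definition LKT (nu : {measure set T -> \bar R}) (K : T -> T -> R) (g : T -> R) : T -> R :=
  fun x => Rintegral nu setT (fun y => K y x * g y).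

Definition Fset (dist : T -> T -> R) (x0 : T) (m1 m2 : R)
  (rho : {measure set T -> \bar R}) (a ta : R -> R) (f : T -> R) :=
  [/\ memL2 rho f,
      {ae rho, forall x, Ball dist x0 m2 x -> 0 <= f x},
      forall r, m1 <= r ->
        Rintegral rho (~` Ball dist x0 r) (fun x => Num.max (f x) 0)
          <= a r * Rintegral rho setT f &
      forall r, m2 <= r ->
        Rintegral rho (~` Ball dist x0 r) (fun x => Num.max (- f x) 0)
          <= ta r * Rintegral rho setT f].

Definition Fnorm dist x0 m1 m2 rho a ta f :=
  Fset dist x0 m1 m2 rho a ta f /\ Rintegral rho setT f = 1.

Definition Gset (dist : T -> T -> R) (x0 : T) (m1 m2 : R)
  (rho : {measure set T -> \bar R}) (a ta : R -> R) (g : T -> R) :=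
  memL2 rho g /\
  forall f, Fset dist x0 m1 m2 rho a ta f -> 0 <= Rintegral rho setT (fun x => f x * g x).

Definition Gnorm dist x0 m1 m2 rho a ta g :=
  Gset dist x0 m1 m2 rho a ta g /\ Rintegral rho setT g = 1.
End L2.

(* Main.v *)
Require Import Defs.
From HB Require Import structures.
From mathcomp Require Import all_boot all_order all_algebra.
From mathcomp Require Import all_classical all_reals all_analysis.
From mathcomp Require Import ring lra measurable_realfun.
Import Order.TTheory GRing.Theory Num.Theory.
Import numFieldNormedType.Exports.
Local Open Scope classical_set_scope.
Local Open Scope ring_scope.

Lemma L2_integrable (R : realType) (d : measure_display) (T : measurableType d)
  (P : probability T R) (f : T -> R) :
  memL2 P f -> P.-integrable setT (EFin \o f).
Proof.
case=> mf i2.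
apply: (@le_integrable _ _ _ P setT measurableT _ (fun x => (1 + f x ^+ 2)%:E)) => //.
- exact/measurable_EFinP.
- move=> x _ /=; rewrite lee_fin (ger0_norm (addr_ge0 ler01 (sqr_ge0 _))).
  rewrite -real_normK ?num_real//.
  have := normr_ge0 (f x); set a := `|f x|; nra.
- apply: (@eq_integrable _ _ _ P setT measurableT
    ((EFin \o cst 1) \+ (fun x => (f x ^+ 2)%:E))).
    by move=> x _.
  apply: integrableD => //; exact: finite_measure_integrable_cst.
Qed.

Lemma split_le (R : realType) (d : measure_display) (T : measurableType d)
  (mu : probability T R) (D : set T) (w u : T -> R) (a b : R) :
  measurable D -> measurable_fun setT w -> mu.-integrable setT (EFin \o u) ->
  (forall y, D y -> `|w y| <= a * `|u y|) ->
  (forall y, ~ D y -> `|w y| <= b * `|u y|) ->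
  `|Rintegral mu setT w| <=
    a * Rintegral mu D (fun y => `|u y|) + b * Rintegral mu (~` D) (fun y => `|u y|).
Proof.
move=> mD mw iu hD hC.
have iuN := integrable_norm iu.
have iw : mu.-integrable setT (EFin \o w).
  apply: (@le_integrable _ _ _ mu setT measurableT _ (EFin \o (fun y => (`|a| + `|b|) * `|u y|))) => //.
  - exact/measurable_EFinP.
  - move=> y _ /=; rewrite lee_fin.
    rewrite [X in _ <= X]ger0_norm ?mulr_ge0 ?addr_ge0 //.
    have [Dy|nDy] := pselect (D y).
      apply: (le_trans (hD y Dy)); apply: ler_wpM2r => //.
      by have := normr_ge0 b; have := ler_norm a; lra.
    apply: (le_trans (hC y nDy)); apply: ler_wpM2r => //.
    by have := normr_ge0 a; have := ler_norm b; lra.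
  - exact: (@integrableZl _ _ _ mu setT measurableT (`|a| + `|b|) _ iuN).
have iwN := integrable_norm iw.
apply: (le_trans (le_normr_Rintegral _ _)) => //.
have mCD : measurable (~` D) by exact: measurableC.
have dj : [disjoint D & ~` D] by apply/disj_setPCl.
rewrite -(setUv D) (@Rintegral_setU _ _ _ mu D (~` D)) ?setUv//.
have iwD : mu.-integrable D (EFin \o (Num.norm \o w)) by exact: integrableS iwN.
have iwC : mu.-integrable (~` D) (EFin \o (Num.norm \o w)) by exact: integrableS iwN.
have iuD : mu.-integrable D (EFin \o (Num.norm \o u)) by exact: integrableS iuN.
have iuC : mu.-integrable (~` D) (EFin \o (Num.norm \o u)) by exact: integrableS iuN.
apply: lerD.
  rewrite -RintegralZl//; apply: le_Rintegral => //.
  exact: (@integrableZl _ _ _ mu D mD a _ iuD).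
rewrite -RintegralZl//; apply: le_Rintegral => //.
exact: (@integrableZl _ _ _ mu (~` D) mCD b _ iuC).
Qed.

Lemma ball_measurable (R : realType) (d : measure_display) (T : measurableType d)
  (dist : T -> T -> R) (x0 : T) (r : R) :
  polish_borel dist -> measurable (Ball dist x0 r).
Proof.
case=> [[d0 d_eq dsym dtri] _ _ hm].
rewrite -[Ball _ _ _]setCK; apply: measurableC.
have op : dopen dist (~` Ball dist x0 r).
  move=> x /= /negP; rewrite -ltNge => hx.
  exists (dist x0 x - r); first by rewrite subr_gt0.
  move=> y hy /=; apply/negP; rewrite -ltNge.
  have := dtri x0 y x; rewrite (dsym y x); lra.
rewrite hm; exact: sub_sigma_algebra.
Qed.

Lemma section_integrable (R : realType) (d : measure_display) (T : measurableType d)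
  (nu : probability T R) (K : T -> T -> R) (g : T -> R) (h : T -> R) (x : T) :
  measurable_fun setT (fun p : T * T => K p.1 p.2) ->
  (forall x y, 0 < K x y /\ K x y <= 1) ->
  nu.-integrable setT (EFin \o g) ->
  measurable_fun setT h -> (forall y, `|h y| <= 1) ->
  nu.-integrable setT (EFin \o (fun y => h y * K y x * g y)).
Proof.
move=> mK hK ig mh hh.
have mg : measurable_fun setT g by case/integrableP: ig => + _; move/measurable_EFinP.
apply: (@le_integrable _ _ _ nu setT measurableT _ (EFin \o g)) => //.
- apply/measurable_EFinP; apply: measurable_funM => //.
  apply: measurable_funM => //.
  change (measurable_fun setT ((fun p : T * T => K p.1 p.2) \o (pair^~ x))).
  exact: (measurableT_comp mK (pair2_measurable x)).
- move=> y _ /=; rewrite lee_fin !normrM.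
  have [K0 K1] := hK y x.
  rewrite (ger0_norm (ltW K0)).
  have := hh y; have := normr_ge0 (g y); have := normr_ge0 (h y).
  set A := `|h y|; set G := `|g y| => A0 G0 A1.
  rewrite -[X in _ <= X]mul1r; apply: ler_wpM2r => //.
  by apply: mulr_ile1 => //; exact: ltW.
Qed.

Lemma LKT_measurable (R : realType) (d : measure_display) (T : measurableType d)
  (nu : probability T R) (K : T -> T -> R) (g : T -> R) :
  measurable_fun setT (fun p : T * T => K p.1 p.2) ->
  measurable_fun setT g ->
  measurable_fun setT (LKT nu K g).
Proof.
move=> mK mg.
pose h : T * T -> \bar R := fun p => (K p.2 p.1 * g p.2)%:E.
have mh : measurable_fun setT h.
  apply/measurable_EFinP; apply: measurable_funM.
    have := measurableT_comp mK (@measurable_swap _ _ T T); exact.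
  have := measurableT_comp mg (@measurable_snd _ _ T T); exact.
have mFp := @measurable_fun_fubini_tonelli_F _ _ T T R nu (h^\+)%E
  (measurable_funepos mh) (fun _ => funepos_ge0 _ _).
have mFm := @measurable_fun_fubini_tonelli_F _ _ T T R nu (h^\-)%E
  (measurable_funeneg mh) (fun _ => funeneg_ge0 _ _).
have -> : LKT nu K g = fun x => fine (fubini_F nu h^\+ x - fubini_F nu h^\- x)%E.
  apply: boolp.funext => x; rewrite /LKT /Rintegral integralE.
  by rewrite /fubini_F; congr (fine (_ - _)); apply: eq_integral => y _; rewrite !(funeposE, funenegE).
apply: measurableT_comp => //; exact: emeasurable_funB.
Qed.

Lemma intZ (R : realType) (d : measure_display) (T : measurableType d)
  (mu : probability T R) (D : set T) (c : R) (g : T -> R) :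
  measurable D ->
  mu.-integrable D (EFin \o g) -> mu.-integrable D (EFin \o (fun y => c * g y)).
Proof.
move=> mD ig; apply: (@eq_integrable _ _ _ mu D mD (fun y => (c%:E * (EFin \o g) y)%E)).
  by move=> y _ /=; rewrite EFinM.
exact: integrableZl.
Qed.

Lemma intB (R : realType) (d : measure_display) (T : measurableType d)
  (mu : probability T R) (D : set T) (f g : T -> R) :
  measurable D -> mu.-integrable D (EFin \o f) ->
  mu.-integrable D (EFin \o g) -> mu.-integrable D (EFin \o (fun y => f y - g y)).
Proof.
move=> mD i1 i2; apply: (@eq_integrable _ _ _ mu D mD ((EFin \o f) \- (EFin \o g))%E).
  by move=> y _ /=; rewrite EFinB.
exact: integrableB.
Qed.

Theorem lemma4p4 (R : realType) (d : measure_display) (T : measurableType d)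
  (dist : T -> T -> R) (x0 : T) (mu nu : probability T R) (m1 m2 : R)
  (K : T -> T -> R) (l : R -> R) (a1 ta1 a2 ta2 : R -> R) (f g : T -> R) (r : R) :
  polish_borel dist ->
  0 < m1 -> m1 <= m2 ->
  measurable_fun setT (fun p : T * T => K p.1 p.2) ->
  (forall x y, 0 < K x y /\ K x y <= 1) ->
  lower_decay dist x0 K l ->
  tail_function a1 -> tail_function ta1 -> tail_function a2 -> tail_function ta2 ->
  (0 < mu (Ball dist x0 m1))%E -> (0 < nu (Ball dist x0 m1))%E ->
  (forall s, 0 < s -> 0 < a1 s) -> (forall s, 0 < s -> 0 < a2 s) ->
  Fnorm dist x0 m1 m2 mu a1 ta1 f ->
  Gnorm dist x0 m1 m2 nu a2 ta2 g ->
  0 < r ->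
  let B := Ball dist x0 r in
  let I := Rintegral mu setT (fun x => LKT nu K g x * f x) in
  (1 + l r) / 2
    - (1 - l r) / 2 * Rintegral mu B (fun x => `|f x|) * Rintegral nu B (fun y => `|g y|)
    - Rintegral mu setT (fun x => `|f x|) * Rintegral nu (~` B) (fun y => `|g y|)
    - Rintegral mu (~` B) (fun x => `|f x|) * Rintegral nu B (fun y => `|g y|)
  <= I
  /\ I <= Rintegral mu setT (fun x => `|f x|) * Rintegral nu setT (fun y => `|g y|).
Proof.
move=> pb _ _ mK hK ld _ _ _ _ _ _ _ _ [[f2 _ _ _] f1] [[g2 _] g1] r0 B I.
have iff := L2_integrable _ _ _ _ _ f2.
have ig := L2_integrable _ _ _ _ _ g2.
have mf : measurable_fun setT f by case: f2.
have mg : measurable_fun setT g by case: g2.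
have mB : measurable B := ball_measurable _ _ _ _ x0 r pb.
have mCB : measurable (~` B) := measurableC mB.
have djB : [disjoint B & ~` B] by apply/disj_setPCl.
have x0B : B x0.
  rewrite /B /Ball /=; case: pb => [[_ deq _ _] _ _ _].
  by rewrite (deq x0 x0).2 // ltW.
have [lr0 lr1] : 0 <= l r /\ l r <= 1.
  case: ld => l0 _ lK; split; first exact: l0 (ltW r0).
  exact: (le_trans (lK r r0 x0 x0 x0B x0B) (hK x0 x0).2).
set c := (1 + l r) / 2.
set gB := Rintegral nu B (fun y => `|g y|).
set gC := Rintegral nu (~` B) (fun y => `|g y|).
set fB := Rintegral mu B (fun y => `|f y|).
set fC := Rintegral mu (~` B) (fun y => `|f y|).
have gT : Rintegral nu setT (fun y => `|g y|) = gB + gC.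
  by rewrite -(setUv B) Rintegral_setU // setUv; exact: integrable_norm.
have fT : Rintegral mu setT (fun y => `|f y|) = fB + fC.
  by rewrite -(setUv B) Rintegral_setU // setUv; exact: integrable_norm.
have gB0 : 0 <= gB by apply: Rintegral_ge0.
have gC0 : 0 <= gC by apply: Rintegral_ge0.
set phi := LKT nu K g.
have mphi : measurable_fun setT phi by exact: LKT_measurable.
have mKx : forall x, measurable_fun setT (fun y => K y x).
  by move=> x; have := measurableT_comp mK (pair2_measurable x); exact.
have iKg : forall x, nu.-integrable setT (EFin \o (fun y => K y x * g y)).
  move=> x; have h1 : forall y : T, `|cst (1 : R) y| <= 1 by move=> y; rewrite normr1.
  have := section_integrable _ _ _ nu K g _ x mK hK ig (measurable_cst (1 : R)) h1.
  apply: eq_integrable => // y _ /=; by rewrite mul1r.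
have iKcg : forall x, nu.-integrable setT (EFin \o (fun y => (K y x - c) * g y)).
  move=> x; apply: (eq_integrable _ (EFin \o (fun y => K y x * g y - c * g y))) => //.
    by move=> y _ /=; rewrite mulrBl.
  exact: (intB _ _ _ _ _ _ _ measurableT (iKg x) (intZ _ _ _ _ _ c _ measurableT ig)).
have phic : forall x, phi x - c = Rintegral nu setT (fun y => (K y x - c) * g y).
  move=> x; rewrite /phi /LKT -[X in _ - X]mulr1 -g1 -RintegralZl //.
  rewrite -RintegralB //; last exact: (intZ _ _ _ _ _ c _ measurableT ig).
  by apply: eq_Rintegral => y _; rewrite mulrBl.
have mKcg : forall x, measurable_fun setT (fun y => (K y x - c) * g y).
  move=> x; apply: measurable_funM => //; apply: measurable_funB => //.
have kB : forall x, B x -> `|phi x - c| <= (1 - l r) / 2 * gB + 1 * gC.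
  move=> x Bx; rewrite phic; apply: split_le => // y.
    move=> By; rewrite normrM; apply: ler_wpM2r => //.
    have := ld; case=> _ _ lK; have := lK r r0 y x By Bx.
    have [K0 K1] := hK y x; rewrite /c => ly.
    by rewrite ler_norml; apply/andP; split; lra.
  move=> _; rewrite normrM; apply: ler_wpM2r => //.
  have [K0 K1] := hK y x; rewrite /c.
  by rewrite ler_norml; apply/andP; split; lra.
have kA : forall x, `|phi x - c| <= 1 * gB + 1 * gC.
  move=> x; rewrite phic; apply: split_le => // y _;
  rewrite normrM; apply: ler_wpM2r => //;
  have [K0 K1] := hK y x; rewrite /c;
  by rewrite ler_norml; apply/andP; split; lra.
have kphi : forall x, `|phi x| <= 1 * gB + 1 * gC.
  move=> x; rewrite /phi /LKT; apply: split_le => //.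
  - by apply: measurable_funM.
  - move=> y _; rewrite normrM; apply: ler_wpM2r => //.
    by have [K0 K1] := hK y x; rewrite ger0_norm // ltW.
  - move=> y _; rewrite normrM; apply: ler_wpM2r => //.
    by have [K0 K1] := hK y x; rewrite ger0_norm // ltW.
have ifN := integrable_norm iff.
have iphif : mu.-integrable setT (EFin \o (fun x => phi x * f x)).
  apply: (@le_integrable _ _ _ mu setT measurableT _
    (EFin \o (fun x => (1 * gB + 1 * gC) * `|f x|))).
  - by apply/measurable_EFinP; apply: measurable_funM.
  - move=> x _ /=; rewrite lee_fin normrM [X in _ <= X]ger0_norm;
      last by apply: mulr_ge0 => //; lra.
    exact: ler_wpM2r.
  - exact: (intZ _ _ _ _ _ _ _ measurableT ifN).
have Ic : I - c = Rintegral mu setT (fun x => (phi x - c) * f x).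
  rewrite /I -[X in _ - X]mulr1 -f1 -RintegralZl //.
  rewrite -RintegralB //; last exact: (intZ _ _ _ _ _ c _ measurableT iff).
  by apply: eq_Rintegral => y _; rewrite mulrBl.
have low : `|I - c| <= ((1 - l r) / 2 * gB + 1 * gC) * fB + (1 * gB + 1 * gC) * fC.
  rewrite Ic; apply: split_le => //.
  - apply: measurable_funM => //; exact: measurable_funB.
  - by move=> y By; rewrite normrM; apply: ler_wpM2r => //; exact: kB.
  - by move=> y _; rewrite normrM; apply: ler_wpM2r => //; exact: kA.
have up : `|I| <= (1 * gB + 1 * gC) * fB + (1 * gB + 1 * gC) * fC.
  apply: split_le => //.
  - by apply: measurable_funM.
  - by move=> y _; rewrite normrM; apply: ler_wpM2r => //; exact: kphi.
  - by move=> y _; rewrite normrM; apply: ler_wpM2r => //; exact: kphi.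
rewrite fT gT; split.
  have E : c - (1 - l r) / 2 * fB * gB - (fB + fC) * gC - fC * gB =
    c - (((1 - l r) / 2 * gB + 1 * gC) * fB + (1 * gB + 1 * gC) * fC) by ring.
  rewrite E; move: low; rewrite ler_norml => /andP[h _]; lra.
have E : (fB + fC) * (gB + gC) = (1 * gB + 1 * gC) * fB + (1 * gB + 1 * gC) * fC
  by ring.
rewrite E; exact: le_trans (ler_norm I) up.
Qed.
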